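(* Let $s\ge 2$, $q=s-1$, and let $c_1,\dots,c_s$ be pairwise distinct real nodes. Let $A,K\in\mathbb{R}^{s\times s}$ and let $B(\sigma)\in\mathbb{R}^{s\times s}$ be given for all $\sigma$ in a set $\Sigma\subset(0,\infty)$ with $1\in\Sigma$, such that for all $\sigma\in\Sigma$ the standard-method order conditions $$AV_q-KV_q\tilde E_q=B(\sigma)V_q\mathcal{P}_q^{-1}S_q(\sigma)^{-1},\qquad A^{\mathsf T}V_q+KV_q\tilde E_q=B(\sigma)^{\mathsf T}V_qS_q(\sigma)\mathcal{P}_q$$ hold, and assume moreover $\mathcal{Q}_{q,q}(1)=e_1e_1^{\mathsf T}\in\mathbb{R}^{q\times q}$. Let $A_0,A_N\in\mathbb{R}^{s\times s}$, $a,w\in\mathbb{R}^s$ and $\sigma_1,\sigma_N\in\Sigma$ be such that $$A_0V_q=a\,e_1^{\mathsf T}+KV_q\tilde E_q,\qquad A_0^{\mathsf T}V_q+KV_q\tilde E_q=B(\sigma_1)^{\mathsf T}V_qS_q(\sigma_1)\mathcal{P}_q,$$ $$A_NV_q-KV_q\tilde E_q=B(\sigma_N)V_q\mathcal{P}_q^{-1}S_q(\sigma_N)^{-1},\qquad A_N^{\mathsf T}V_q+KV_q\tilde E_q=w\,\mathbb{1}_q^{\mathsf T}.$$ Then $a=A_0\mathbb{1}_s$, $w=A_N^{\mathsf T}\mathbb{1}_s$, and there exist vectors $\phi_0,\phi_N\in\mathbb{R}^s$ such that $$A_0=A+V_s^{-\mathsf T}e_s\,\phi_0^{\mathsf T}V_s^{-1},\qquad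 A_N=A+\phi_N\,e_s^{\mathsf T}V_s^{-1},$$ and, for $j=2,\dots,q$, $$e_j^{\mathsf T}\phi_0=-e_s^{\mathsf T}\mathcal{Q}_{s,q}(1)e_j,\qquad \phi_N^{\mathsf T}V_q\mathcal{P}_q^{-1}e_j=-\hat b_{js}(1),$$ where $\hat b_{js}(1)$ denotes the $(j,s)$ entry of $\hat B(1)=V_s^{\mathsf T}B(1)V_s$.
   Context: Notation: $e_i$ is the $i$-th cardinal basis vector (of the dimension dictated by context), $\mathbb{1}_k=(1,\dots,1)^{\mathsf T}\in\mathbb{R}^k$. For the nodes $\mathbf{c}=(c_1,\dots,c_s)^{\mathsf T}$, $\mathbf{c}^k=(c_1^k,\dots,c_s^k)^{\mathsf T}$, and for $r\le s$ the Vandermonde matrix is $V_r=(\mathbb{1},\mathbf{c},\dots,\mathbf{c}^{r-1})\in\mathbb{R}^{s\times r}$. The Pascal matrix is $\mathcal{P}_r=\big(\binom{j-1}{i-1}\big)_{i,j=1}^r$, the scaled shift matrix is $\tilde E_r=(i\,\delta_{i+1,j})_{i,j=1}^r$, and $S_r(\sigma)=\mathrm{diag}(1,\sigma,\dots,\sigma^{r-1})$. For $r,r'\le s$, $\mathcal{Q}_{r,r'}(\sigma):=V_r^{\mathsf T}B(\sigma)V_{r'}\mathcal{P}_{r'}^{-1}\in\mathbb{R}^{r\times r'}$. These are the order conditions of order $q$ for a Peer two-step method $A Y_n=B(\sigma_n)Y_{n-1}+h_nKF(Y_n)$ with stepsize ratio $\sigma_n=h_n/h_{n-1}$, its discrete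 adjoint, a starting step $A_0Y_0=a\otimes y_0+h_0KF(Y_0)$ and an end step with matrix $A_N$ and output weight $w$. *)

(* Defs.v *)
From HB Require Import structures.
From mathcomp Require Import all_boot all_order all_algebra.
From mathcomp Require Import all_reals.
Set Implicit Arguments. Unset Strict Implicit. Unset Printing Implicit Defensive.
Import Order.TTheory GRing.Theory Num.Theory.
Local Open Scope ring_scope.

Section PeerDefs.
Variable R : realType.

Definition vdm (s r : nat) (c : 'cV[R]_s) : 'M[R]_(s, r) :=
  \matrix_(i < s, j < r) (c i 0) ^+ j.

(* Pascal matrix P_r = (binom(j-1, i-1))_{i,j=1..r}; 0-indexed: binom(j, i) *)
Definition pascal (r : nat) : 'M[R]_r := \matrix_(i < r, j < r) ('C(j, i))%:R.

(* Scaled shift E~_r = (i delta_{i+1,j}); 0-indexed: entry (i,j) = (i+1) if j = i+1 *)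
Definition Etilde (r : nat) : 'M[R]_r :=
  \matrix_(i < r, j < r) (if j == i.+1 :> nat then (i.+1)%:R else 0).

Definition Smat (r : nat) (sigma : R) : 'M[R]_r :=
  \matrix_(i < r, j < r) (if i == j then sigma ^+ i else 0).

Definition Qmat (s r r' : nat) (c : 'cV[R]_s) (B : R -> 'M[R]_s) (sigma : R)
  : 'M[R]_(r, r') :=
  (vdm r c)^T *m B sigma *m vdm r' c *m invmx (pascal r').

Definition Bhat (s : nat) (c : 'cV[R]_s) (B : R -> 'M[R]_s) (sigma : R) : 'M[R]_s :=
  (vdm s c)^T *m B sigma *m vdm s c.

End PeerDefs.

(* Main.v *)
Require Import Defs.
From HB Require Import structures.
From mathcomp Require Import all_boot all_order all_algebra.
From mathcomp Require Import all_reals.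
Import Order.TTheory GRing.Theory Num.Theory.
Local Open Scope ring_scope.

Lemma vdm_unit (R : realType) m (c : 'cV[R]_m) :
  injective (fun i : 'I_m => c i 0) -> vdm m c \in unitmx.
Proof.
move=> inj.
have -> : vdm m c = (Vandermonde m c^T)^T.
  by apply/matrixP => i j; rewrite !mxE.
rewrite unitmx_tr unitmxE det_Vandermonde unitfE.
apply/prodf_neq0 => i _; apply/prodf_neq0 => j ij.
rewrite !mxE subr_eq0; apply/eqP => /inj /eqP; rewrite eq_sym.
by move/eqP=> E; move: ij; rewrite E ltnn.
Qed.

Lemma pascal_unit (R : realType) r : pascal R r \in unitmx.
Proof.
rewrite -unitmx_tr unitmxE det_trig.
  rewrite unitfE; apply/prodf_neq0 => i _; rewrite !mxE binn; exact: oner_neq0.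
apply/is_trig_mxP => i j ij; rewrite !mxE bin_small //.
Qed.

Lemma delta_entry (R : realType) m p (X : 'M[R]_(m, p)) i k :
  delta_mx (0:'I_1) i *m X *m delta_mx k (0:'I_1) = (X i k)%:M.
Proof.
rewrite -rowE -colE; apply/matrixP => x y; rewrite !ord1 !mxE eqxx /= mulr1n.
by [].
Qed.

Lemma tr11 (R : realType) (X : 'M[R]_1) : X^T = X.
Proof. by apply/matrixP => x y; rewrite !ord1 !mxE. Qed.
Lemma keyL (R : realType) n (c : 'cV[R]_(n.+2)) (M : 'M[R]_(n.+2)) :
  (vdm n.+1 c)^T *m M = 0 ->
  (vdm n.+2 c)^T *m M = delta_mx ord_max 0 *m row ord_max ((vdm n.+2 c)^T *m M).
Proof.
move=> H0; apply/matrixP => i k.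
rewrite [RHS]mxE big_ord1 [delta_mx _ _ i _]mxE [row _ _ _ _]mxE /=.
have [->|ne] := eqVneq i ord_max; first by rewrite eqxx mul1r.
rewrite mul0r.
have lt : (i < n.+1)%N.
  by move: (ltn_ord i) ne; rewrite ltnS leq_eqVlt => /orP[/eqP E|//]; 
     rewrite -(inj_eq val_inj) /= E eqxx.
move/matrixP: H0 => /(_ (Ordinal lt) k); rewrite [RHS]mxE => <-.
rewrite !mxE; apply: eq_bigr => l _; rewrite !mxE //.
Qed.

Lemma vdm_col (R : realType) n (c : 'cV[R]_(n.+2)) (j : 'I_n.+1) :
  vdm n.+2 c *m delta_mx (widen_ord (leqnSn _) j) (0:'I_1) = vdm n.+1 c *m delta_mx j (0:'I_1).
Proof. by rewrite -!colE; apply/matrixP => i k; rewrite !mxE. Qed.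

(* s = n.+2 (so s >= 2), q = s - 1 = n.+1 *)
Theorem lemma1 (R : realType) (n : nat) (c : 'cV[R]_(n.+2))
  (Sigma : R -> Prop) (A K : 'M[R]_(n.+2)) (B : R -> 'M[R]_(n.+2))
  (A0 AN : 'M[R]_(n.+2)) (a w : 'cV[R]_(n.+2)) (sigma1 sigmaN : R) :
  injective (fun i : 'I_(n.+2) => c i 0) ->
  (forall sigma, Sigma sigma -> 0 < sigma) ->
  Sigma 1 ->
  (forall sigma, Sigma sigma ->
     A *m vdm n.+1 c - K *m vdm n.+1 c *m Etilde R n.+1
       = B sigma *m vdm n.+1 c *m invmx (pascal R n.+1) *m invmx (Smat n.+1 sigma)
  /\ A^T *m vdm n.+1 c + K *m vdm n.+1 c *m Etilde R n.+1
       = (B sigma)^T *m vdm n.+1 c *m Smat n.+1 sigma *m pascal R n.+1) ->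
  Qmat n.+1 n.+1 c B 1 = delta_mx 0 0 ->
  Sigma sigma1 -> Sigma sigmaN ->
  A0 *m vdm n.+1 c = a *m delta_mx 0 0 + K *m vdm n.+1 c *m Etilde R n.+1 ->
  A0^T *m vdm n.+1 c + K *m vdm n.+1 c *m Etilde R n.+1
    = (B sigma1)^T *m vdm n.+1 c *m Smat n.+1 sigma1 *m pascal R n.+1 ->
  AN *m vdm n.+1 c - K *m vdm n.+1 c *m Etilde R n.+1
    = B sigmaN *m vdm n.+1 c *m invmx (pascal R n.+1) *m invmx (Smat n.+1 sigmaN) ->
  AN^T *m vdm n.+1 c + K *m vdm n.+1 c *m Etilde R n.+1
    = w *m const_mx 1 ->
  a = A0 *m const_mx 1 /\ w = AN^T *m const_mx 1 /\
  exists phi0 phiN : 'cV[R]_(n.+2),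
    A0 = A + (invmx (vdm n.+2 c))^T *m delta_mx ord_max 0 *m phi0^T
             *m invmx (vdm n.+2 c) /\
    AN = A + phiN *m delta_mx 0 ord_max *m invmx (vdm n.+2 c) /\
    (forall j : 'I_(n.+1), (0 < j)%N ->
       (delta_mx 0 (widen_ord (leqnSn _) j) *m phi0 : 'M[R]_1)
         = - (delta_mx 0 ord_max *m Qmat n.+2 n.+1 c B 1 *m delta_mx j 0) /\
       phiN^T *m vdm n.+1 c *m invmx (pascal R n.+1) *m delta_mx j 0
         = - (Bhat c B 1 (widen_ord (leqnSn _) j) ord_max)%:M).
Proof.
move=> inj _ S1 hO _ s1 sN hA0 hA0T hAN hANT.
rewrite /Qmat /Bhat.
have hV := @vdm_unit _ _ _ inj.
have hP := pascal_unit R n.+1.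
have hcol := @vdm_col _ _ c.
set V := vdm n.+2 c in hV hcol *; set Vq := vdm n.+1 c in hcol hO hA0 hA0T hAN hANT *.
set P := pascal R n.+1 in hP *; set E := Etilde R n.+1 in hA0 hA0T hAN hANT hO *.
have hS1 : Smat n.+1 (1:R) = 1%:M.
  by apply/matrixP => i j; rewrite !mxE expr1n; case: (i == j).
have [hA1 hA2] := hO 1 S1; rewrite hS1 invmx1 !mulmx1 in hA1 hA2.
have [_ hs1] := hO _ s1; have [hsN _] := hO _ sN.
have e0 : (A0 - A)^T *m Vq = 0.
  rewrite linearB /= mulmxBl.
  suff -> : A0^T *m Vq = A^T *m Vq by rewrite subrr.
  by apply: (addIr (K *m Vq *m E)); rewrite hA0T hs1.
have eN : (AN - A) *m Vq = 0.
  rewrite mulmxBl.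
  suff -> : AN *m Vq = A *m Vq by rewrite subrr.
  by apply: (addIr (- (K *m Vq *m E))); rewrite hAN hsN.
have e0' : Vq^T *m (A0 - A) = 0 by rewrite -[A0 - A]trmxK -trmx_mul e0 trmx0.
have eN' : Vq^T *m (AN - A)^T = 0 by rewrite -trmx_mul eN trmx0.
have kk0 := @keyL _ _ _ _ e0'; have kkN := @keyL _ _ _ _ eN'.
rewrite -/V in kk0 kkN.
have hVq1 : Vq *m delta_mx 0 (0:'I_1) = const_mx 1.
  by rewrite -colE; apply/matrixP => i k; rewrite !mxE.
have hE0 : E *m delta_mx 0 (0:'I_1) = 0.
  by rewrite -colE; apply/matrixP => i k; rewrite !mxE.
have hd : delta_mx (0:'I_1) (0:'I_(n.+1)) *m delta_mx 0 (0:'I_1) = 1 :> 'M[R]_1.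
  by rewrite mul_delta_mx; apply/matrixP => x y; rewrite !ord1 !mxE.
have hdj : forall j : 'I_n.+1, j != 0 ->
    delta_mx (0:'I_1) (0:'I_(n.+1)) *m delta_mx j (0:'I_1) = 0 :> 'M[R]_1.
  by move=> j jn; rewrite mul_delta_mx_0 // eq_sym.
have hc1 : const_mx 1 *m delta_mx (0:'I_(n.+1)) (0:'I_1) = 1 :> 'M[R]_1.
  by rewrite -colE; apply/matrixP => x y; rewrite !ord1 !mxE.
have hANT' : AN^T *m Vq = w *m const_mx 1 - K *m Vq *m E by rewrite -hANT addrK.
split.
  rewrite -hVq1 mulmxA hA0 mulmxDl -!mulmxA hd hE0 !mulmx0 addr0 mulmx1 //.
split.
  by rewrite -hVq1 mulmxA hANT' mulmxBl -!mulmxA hc1 hE0 !mulmx0 subr0 mulmx1.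
exists (row ord_max (V^T *m (A0 - A)) *m V)^T, (row ord_max (V^T *m (AN - A)^T))^T.
have hWV : (invmx V)^T *m V^T = 1 by rewrite -trmx_mul mulmxV // trmx1.
split.
  rewrite trmxK !mulmxA -(mulmxA (invmx V)^T (delta_mx ord_max 0)) -kk0.
  rewrite !mulmxA hWV mul1mx -mulmxA mulmxV // mulmx1.
  by rewrite addrC subrK.
split.
  have -> : (row ord_max (V^T *m (AN - A)^T))^T *m delta_mx 0 ord_max = (AN - A) *m V.
    by rewrite -trmx_delta -trmx_mul -kkN trmx_mul trmxK trmxK.
  by rewrite -mulmxA mulmxV // mulmx1 addrC subrK.
move=> j j0.
have jn : j != 0 by rewrite -(inj_eq val_inj) /= -lt0n.
have hA' : A *m Vq = B 1 *m Vq *m invmx P + K *m Vq *m E by rewrite -hA1 subrK.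
have hA'' : A^T *m Vq = (B 1)^T *m Vq *m P - K *m Vq *m E by rewrite -hA2 addrK.
split.
  rewrite -[LHS]tr11 trmx_mul trmxK trmx_delta -(mulmxA (row _ _)). rewrite (hcol j) rowE.
  have hM0 : (A0 - A) *m (Vq *m delta_mx j (0:'I_1))
      = - (B 1 *m (Vq *m (invmx P *m delta_mx j (0:'I_1)))).
    rewrite !mulmxA mulmxBl hA0 hA' !(mulmxBl, mulmxDl) -(mulmxA a) hdj // mulmx0 add0r.
    by rewrite opprD addrC -addrA addNr addr0.
  by rewrite -!mulmxA hM0 !mulmxN.
have hc : const_mx 1 *m invmx P = delta_mx (0:'I_1) (0:'I_n.+1).
  have <- : delta_mx (0:'I_1) (0:'I_(n.+1)) *m P = const_mx 1.
    by rewrite -rowE; apply/matrixP => x y; rewrite !mxE bin0.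
  by rewrite -mulmxA mulmxV // mulmx1.
have hMN : (AN - A)^T *m (Vq *m (invmx P *m delta_mx j (0:'I_1)))
    = - ((B 1)^T *m (V *m delta_mx (widen_ord (leqnSn _) j) (0:'I_1))).
  rewrite hcol linearB /= mulmxBl !mulmxA hANT' hA'' !mulmxBl.
  have -> : w *m const_mx 1 *m invmx P *m delta_mx j (0:'I_1) = 0.
    by rewrite -!mulmxA (mulmxA (const_mx 1)) hc hdj // !mulmx0.
  have -> : (B 1)^T *m Vq *m P *m invmx P *m delta_mx j (0:'I_1) = (B 1)^T *m Vq *m delta_mx j (0:'I_1).
    by rewrite -(mulmxA _ P) mulmxV // mulmx1.
  by rewrite sub0r opprB addrA addNr add0r.
rewrite trmxK rowE -!mulmxA hMN !mulmxN; congr (- _).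
have := @delta_entry _ _ _ (V^T *m (B 1)^T *m V) ord_max (widen_ord (leqnSn _) j).
rewrite !mulmxA => ->.
have -> : V^T *m (B 1)^T *m V = (V^T *m B 1 *m V)^T by rewrite !trmx_mul trmxK mulmxA.
by rewrite mxE.
Qed.
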